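(* Let $\Sigma$ be a finite alphabet and let $C \subseteq \Sigma^n$ be a code with $|C|\ge 2$ and minimum Levenshtein distance $d$. Let $t<n$ be a non-negative integer, let $N$ be an integer with $n-t\le N\le n+t$, let $v\in\Sigma^N$, and let $\ell = |B_\mathsf{L}(v,t,t)\cap C|$. If $$t < n - \sqrt{n(n-d/2)},$$ then $$\ell \leq \frac{(d/2)(n+t)}{(d/2-2t)n+t^2} \leq nd.$$
   Context: For words $x,y$ over $\Sigma$ (possibly of different lengths), the Levenshtein distance $d_\mathsf{L}(x,y)$ is the minimum number of single-symbol insertions and deletions needed to transform $x$ into $y$. The minimum Levenshtein distance of a code $C$ is $\min\{d_\mathsf{L}(c_1,c_2): c_1\neq c_2 \in C\}$. For a word $v$ and non-negative integers $a,b$, $B_\mathsf{L}(v,a,b)$ denotes the set of all words obtainable from $v$ by at most $a$ insertions and at most $b$ deletions. *)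

(* Defs.v *)
From HB Require Import structures.
From mathcomp Require Import all_boot all_order all_algebra.
Set Implicit Arguments. Unset Strict Implicit. Unset Printing Implicit Defensive.

Section Lev.
Variable T : finType.

Definition del1 (x : seq T) : seq (seq T) :=
  [seq take i x ++ drop i.+1 x | i <- iota 0 (size x)].

Definition ins1 (x : seq T) : seq (seq T) :=
  [seq take i x ++ a :: drop i x | i <- iota 0 (size x).+1, a <- enum T].

(* reachk k a b x y : y is obtained from x by a sequence of exactly a
   single-symbol insertions and b single-symbol deletions (in any order);
   k is fuel, equal to a + b. *)
Fixpoint reachk (k a b : nat) (x y : seq T) : bool :=
  if k is k'.+1 then
    ((0 < a) && has (fun z => reachk k' a.-1 b z y) (ins1 x))
    || ((0 < b) && has (fun z => reachk k' a b.-1 z y) (del1 x))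
  else [&& a == 0, b == 0 & x == y].

Definition reach (a b : nat) (x y : seq T) : bool := reachk (a + b) a b x y.

Definition inBL (v : seq T) (a b : nat) (w : seq T) : bool :=
  [exists a' : 'I_a.+1, exists b' : 'I_b.+1, reach a' b' v w].

(* The search range is bounded by
   size x + size y, which always suffices (delete all, insert all). *)
Definition dL (x y : seq T) : nat :=
  find (fun k => [exists a : 'I_k.+1, reach a (k - a) x y])
       (iota 0 (size x + size y).+1).

Definition min_lev_dist (n : nat) (C : {set n.-tuple T}) (d : nat) : Prop :=
  (exists c1, exists c2, [/\ c1 \in C, c2 \in C, c1 != c2 & dL c1 c2 = d])
  /\ (forall c1 c2, c1 \in C -> c2 \in C -> c1 != c2 -> d <= dL c1 c2).

End Lev.

(* Main.v *)
Require Import Defs.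
From HB Require Import structures.
From mathcomp Require Import all_boot all_order all_algebra.
From mathcomp Require Import zify ring lra.
Import Order.TTheory GRing.Theory Num.Theory.
Set Implicit Arguments. Unset Strict Implicit.
Section Seqs.
Variable T : finType.

Lemma mem_del1 (x x' : seq T) : x' \in del1 x ->
  exists2 i, i < size x & x' = take i x ++ drop i.+1 x.
Proof. by case/mapP=> i; rewrite mem_iota add0n => /andP[_ Hi] ->; exists i. Qed.

Lemma mem_ins1 (x x' : seq T) : x' \in ins1 x ->
  exists i a, x' = take i x ++ a :: drop i x.
Proof. by case/allpairsP=> [[i a]] [_ _ ->]; exists i, a. Qed.

Lemma del1_0 (h : T) x : x \in del1 (h :: x).
Proof.
apply/mapP; exists 0; first by rewrite mem_iota.
by rewrite take0 drop1.
Qed.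

Lemma del1_S (h : T) x x' : x' \in del1 x -> h :: x' \in del1 (h :: x).
Proof.
case/mem_del1=> i Hi ->; apply/mapP; exists i.+1.
  by rewrite mem_iota /=; lia.
by [].
Qed.

Lemma ins1_0 (a : T) x : a :: x \in ins1 x.
Proof.
have -> : a :: x = take 0 x ++ a :: drop 0 x by rewrite take0 drop0.
apply: allpairs_f; last by rewrite mem_enum.
by rewrite mem_iota.
Qed.

Lemma ins1_S (h : T) x x' : x' \in ins1 x -> h :: x' \in ins1 (h :: x).
Proof.
case/allpairsP=> [[i a]] [Hi _ ->].
have Hi' : i < (size x).+1 by move: Hi; rewrite mem_iota.
have -> : h :: (take i x ++ a :: drop i x) = take i.+1 (h :: x) ++ a :: drop i.+1 (h :: x) by [].
apply: allpairs_f; last by rewrite mem_enum.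
rewrite mem_iota /=; lia.
Qed.

Lemma subseq_cons_inv (z : seq T) h s :
  subseq z (h :: s) -> subseq z s \/ exists2 z0, z = h :: z0 & subseq z0 s.
Proof.
case: z => [|e z0] /=; first by left; apply: sub0seq.
case: eqP => [-> H|_ H]; [right; by exists z0 | by left].
Qed.

Lemma subseq_drop1 (s1 : seq T) a s2 z : subseq z (s1 ++ a :: s2) ->
  exists z', [/\ subseq z' z, subseq z' (s1 ++ s2) & size z <= (size z').+1].
Proof.
elim: s1 z => [|h s1 IH] z /=.
  case/subseq_cons_inv => [H|[z0 -> H]].
    by exists z; rewrite subseq_refl H.
  by exists z0; rewrite subseq_cons H.
case/subseq_cons_inv => [H|[z0 -> H]].
  case: (IH _ H) => z' [H1 H2 H3]; exists z'; split => //.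
  exact: subseq_trans H2 (subseq_cons _ _).
case: (IH _ H) => z' [H1 H2 H3]; exists (h :: z'); split => //=.
  by rewrite eqxx.
by rewrite eqxx.
Qed.

Lemma sound k a b (x y : seq T) : reachk k a b x y ->
  exists z, [/\ subseq z x, subseq z y, size x <= size z + b & size y + b = size x + a].
Proof.
elim: k a b x y => [|k IH] a b x y /=.
  case/and3P => /eqP -> /eqP -> /eqP ->; exists y; rewrite subseq_refl; split => //; lia.
case/orP => /andP [Hp /hasP [x' Hx' Hr]].
  case: (IH _ _ _ _ Hr) => z [H1 H2 H3 H4].
  case/mem_ins1: Hx' => i [e Ex']; subst x'.
  case: (subseq_drop1 H1) => z' [G1 G2 G3].
  rewrite cat_take_drop in G2.
  have Hsz : size (take i x ++ e :: drop i x) = (size x).+1.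
    by rewrite size_cat /= addnS -size_cat cat_take_drop.
  rewrite Hsz in H3 H4.
  exists z'; split => //; first exact: subseq_trans G1 H2.
    set s1 := size z' in G3 *; set s2 := size z in G3 H3 *; set s3 := size x in H3 *; lia.
  set s3 := size x in H4 *; set s4 := size y in H4 *; lia.
case: (IH _ _ _ _ Hr) => z [H1 H2 H3 H4].
case/mem_del1: Hx' => i Hi Ex'; subst x'.
have Hs : size (take i x ++ drop i.+1 x) = (size x).-1.
  rewrite size_cat size_take size_drop Hi; lia.
have Hsub : subseq (take i x ++ drop i.+1 x) x.
  have x0 : T by case: x Hi {Hr H1 H3 H4 Hs} => [|h].
  rewrite -[in X in subseq _ X](cat_take_drop i x) (drop_nth x0 Hi).
  by apply: cat_subseq; [apply: subseq_refl | apply: subseq_cons].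
exists z; split => //; first exact: subseq_trans H1 Hsub.
  move: H3; rewrite Hs; set s2 := size z; set s3 := size x; lia.
move: H4; rewrite Hs; set s3 := size x; set s4 := size y; lia.
Qed.


Lemma size_del1 (x x' : seq T) : x' \in del1 x -> size x' = (size x).-1.
Proof. case/mem_del1=> i Hi ->; rewrite size_cat size_take size_drop Hi; lia. Qed.

Lemma size_ins1 (x x' : seq T) : x' \in ins1 x -> size x' = (size x).+1.
Proof.
case/mem_ins1=> i [a ->]; by rewrite size_cat /= addnS -size_cat cat_take_drop.
Qed.

Lemma del_exists (x z : seq T) : subseq z x -> size z < size x ->
  exists2 x', x' \in del1 x & subseq z x'.
Proof.
elim: x z => [|h x IH] z //= Hs Hlt.
case/subseq_cons_inv: Hs => [H|[z0 Ez H]].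
  by exists x => //; apply: del1_0.
subst z; case: (IH z0 H _) => [|x' H1 H2]; first by move: Hlt => /=; lia.
by exists (h :: x'); [apply: del1_S | rewrite /= eqxx].
Qed.

Lemma ins_exists (y z : seq T) : subseq z y -> size z < size y ->
  exists2 z', z' \in ins1 z & subseq z' y.
Proof.
elim: y z => [|h y IH] z //= Hs Hlt.
case/subseq_cons_inv: (Hs) => [H|[z0 Ez H]].
  by exists (h :: z); [apply: ins1_0 | rewrite /= eqxx].
subst z; case: (ltnP (size z0) (size y)) => Hl.
  case: (IH z0 H Hl) => z' H1 H2.
  by exists (h :: z'); [apply: ins1_S | rewrite /= eqxx].
have Hsz := size_subseq H.
have E : z0 = y.
  apply/eqP; rewrite -(size_subseq_leqif H).
  by rewrite eqn_leq Hsz Hl.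
by move: Hlt; rewrite E /= ltnn.
Qed.

Lemma phase2 k (z y : seq T) : subseq z y -> size y = size z + k -> reachk k k 0 z y.
Proof.
elim: k z => [|k IH] z Hs Hsz /=.
  rewrite addn0 in Hsz; have E : z == y by rewrite -(size_subseq_leqif Hs) Hsz.
  by rewrite E.
case: (ins_exists Hs _) => [|z' H1 H2]; first by rewrite Hsz; lia.
apply/orP; left; apply/hasP; exists z' => //.
apply: IH => //; rewrite (size_ins1 H1) Hsz; lia.
Qed.

Lemma phase1 j (x z y : seq T) : subseq z x -> subseq z y -> size x = size z + j ->
  reachk (j + (size y - size z)) (size y - size z) j x y.
Proof.
elim: j x => [|j IH] x Hx Hy Hsz.
  rewrite addn0 in Hsz; have E : z == x by rewrite -(size_subseq_leqif Hx) Hsz.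
  rewrite -(eqP E) add0n; apply: phase2 => //.
  by rewrite subnKC // size_subseq.
case: (del_exists Hx _) => [|x' H1 H2]; first by rewrite Hsz; lia.
rewrite addSn /=; apply/orP; right; apply/hasP; exists x' => //.
apply: IH => //; rewrite (size_del1 H1) Hsz; lia.
Qed.

Lemma reach_common n (x y z : seq T) : subseq z x -> subseq z y ->
  size x = n -> size y = n -> reach (n - size z) (n - size z) x y.
Proof.
move=> Hx Hy Ex Ey; rewrite /reach.
have := phase1 (j := n - size z) Hx Hy; rewrite Ey; apply.
by rewrite Ex subnKC // -Ex size_subseq.
Qed.


Lemma dL_le n (x y z : seq T) : subseq z x -> subseq z y ->
  size x = n -> size y = n -> dL x y <= (n - size z) + (n - size z).
Proof.
move=> Hx Hy Ex Ey; set k := (n - size z) + (n - size z).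
have Hp : [exists a : 'I_k.+1, reach a (k - a) x y].
  have Ha : n - size z < k.+1 by rewrite /k; lia.
  apply/existsP; exists (Ordinal Ha) => /=.
  have -> : k - (n - size z) = n - size z by rewrite /k; lia.
  exact: reach_common Hx Hy Ex Ey.
rewrite /dL leqNgt; apply/negP => Hlt.
have := before_find 0 Hlt; rewrite nth_iota; last by rewrite Ex Ey /k; lia.
by rewrite add0n Hp.
Qed.

Lemma dL_even (x y : seq T) : size x = size y -> dL x y < (size x + size y).+1 ->
  exists a, dL x y = a + a.
Proof.
move=> Es Hlt.
set s := iota 0 (size x + size y).+1.
set p := (fun k => [exists a : 'I_k.+1, reach a (k - a) x y]).
have Hh : has p s by rewrite has_find size_iota.
have Hf : find p s < size s by rewrite -has_find.
rewrite /s size_iota in Hf.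
have := nth_find 0 Hh; rewrite /s nth_iota //.
rewrite add0n /p => /existsP [a Ha].
case: (sound Ha) => z [_ _ _ H].
have Ha' := ltn_ord a.
have Ek : dL x y = find p s by [].
exists a; rewrite Ek /p /s. clear -H Ha' Es. lia.
Qed.

End Seqs.
Lemma enum_sub (I : finType) (A B : {set I}) : A \subset B -> subseq (enum A) (enum B).
Proof.
move=> /subsetP H; rewrite /enum_mem.
have -> : [seq x <- Finite.enum I | mem A x] = [seq x <- [seq x <- Finite.enum I | mem B x] | mem A x].
  rewrite -filter_predI; apply: eq_filter => x /=.
  by case Hx: (x \in A) => //=; rewrite (H x Hx).
exact: filter_subseq.
Qed.

Lemma cauchy_nat (I : finType) (f : I -> nat) :
  (\sum_i f i) * (\sum_i f i) <= #|I| * \sum_i (f i * f i).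
Proof.
rewrite big_distrlr /=.
have H : forall i j, (f i * f j).*2 <= f i * f i + f j * f j.
  move=> i j; move: (f i) (f j) => a b; rewrite -mul2n.
  case: (leqP a b) => h.
    rewrite -(subnKC h); move: (b - a) => k; nia.
  rewrite -(subnKC (ltnW h)); move: (a - b) => k; nia.
rewrite -leq_double -!mul2n big_distrr /=.
apply: (@leq_trans (\sum_i \sum_j (f i * f i + f j * f j))).
  apply: leq_sum => i _; rewrite big_distrr /=; apply: leq_sum => j _.
  by rewrite mul2n H.
rewrite (eq_bigr (fun i => #|I| * (f i * f i) + \sum_j (f j * f j))); last first.
  move=> i _; rewrite big_split /= -sum1_card big_distrl /=.
  by congr (_ + _); apply: eq_bigr => j _; rewrite mul1n.
rewrite big_split /= -big_distrr /= sum_nat_const.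
rewrite (@eq_card _ xpredT I) //.
lia.
Qed.

Lemma sum_in (I : finType) (A : {set I}) : \sum_i (i \in A : nat) = #|A|.
Proof. by rewrite -sum1_card [RHS]big_mkcond; apply: eq_bigr => p _; case: (p \in A). Qed.

Lemma johnson (I : finType) (N : nat) (S : I -> {set 'I_N}) (L : {set I}) W lam :
 (forall c, c \in L -> #|S c| = W) ->
 (forall c c', c \in L -> c' \in L -> c != c' -> #|S c :&: S c'| <= lam) ->
 (#|L| * W) * (#|L| * W) <= N * (#|L| * (W + (#|L| - 1) * lam)).
Proof.
move=> HW Hl.
set m := fun p : 'I_N => \sum_(c in L) (p \in S c : nat).
have Hs : \sum_p m p = #|L| * W.
  rewrite /m exchange_big /= -sum_nat_const; apply: eq_bigr => c Hc.
  by rewrite sum_in HW.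
have Hq : \sum_p (m p * m p) = \sum_(c in L) \sum_(c' in L) #|S c :&: S c'|.
  rewrite /m; under eq_bigr => p _ do rewrite big_distrlr /=.
  rewrite exchange_big /=; apply: eq_bigr => c _.
  rewrite exchange_big /=; apply: eq_bigr => c' _.
  by rewrite -(sum_in (S c :&: S c')); apply: eq_bigr => p _; rewrite in_setI mulnb.
have Hb : forall c, c \in L -> \sum_(c' in L) #|S c :&: S c'| <= W + (#|L| - 1) * lam.
  move=> c Hc; rewrite (bigD1 c) //= setIid HW //.
  rewrite leq_add2l.
  have E : \sum_(c' in L) lam = lam + \sum_(c' in L | c' != c) lam by rewrite (bigD1 c).
  rewrite sum_nat_const in E.
  apply: (@leq_trans (\sum_(c' in L | c' != c) lam)).
    apply: leq_sum => c' /andP [Hc' Hne]; apply: Hl => //; by rewrite eq_sym.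
  have H1 : 0 < #|L| by apply/card_gt0P; exists c.
  move: E; set s := \sum_(c' in L | c' != c) lam; nia.
have C := cauchy_nat m; rewrite Hs card_ord Hq in C.
apply: (leq_trans C); rewrite leq_mul2l; apply/orP; right.
rewrite -sum_nat_const; exact: leq_sum.
Qed.
Local Open Scope ring_scope.
Theorem mainTheorem3 (R : rcfType) (T : finType) (n : nat)
    (C : {set n.-tuple T}) (d t N : nat) (v : N.-tuple T) :
  (2 <= #|C|)%N ->
  min_lev_dist C d ->
  (t < n)%N ->
  (n - t <= N <= n + t)%N ->
  t%:R < n%:R - Num.sqrt (n%:R * (n%:R - d%:R / 2) : R) ->
  let l := #|[set c in C | inBL v t t c]| in
  (l%:R : R) <= (d%:R / 2 * (n + t)%:R) / ((d%:R / 2 - 2 * t%:R) * n%:R + t%:R ^+ 2)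
  /\ ((d%:R : R) / 2 * (n + t)%:R) / ((d%:R / 2 - 2 * t%:R) * n%:R + t%:R ^+ 2)
     <= (n * d)%:R :> R.
Proof.
move=> HC [[c1 [c2 [Hc1 Hc2 Hne Hd]]] Hmin] Htn /andP[HN1 HN2] Hsq l.
have Hsz : forall c : n.-tuple T, size c = n by move=> c; rewrite size_tuple.
have Hd2n : (d <= n + n)%N.
  rewrite -Hd; have := dL_le (sub0seq c1) (sub0seq c2) (Hsz c1) (Hsz c2).
  by rewrite subn0.
have [e He] : exists e, d = (e + e)%N.
  rewrite -Hd; apply: dL_even; rewrite !Hsz //; rewrite Hd; lia.
have Hen : (e <= n)%N by lia.
have Hpair : forall (c c' : n.-tuple T) (z : seq T), c \in C -> c' \in C -> c != c' ->
    subseq z c -> subseq z c' -> (size z <= n - e)%N.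
  move=> c c' z Hc Hc' Hcc Hz Hz'.
  have := Hmin c c' Hc Hc' Hcc; have := dL_le Hz Hz' (Hsz c) (Hsz c').
  have := size_subseq Hz; rewrite Hsz.
  set s := size z; set k := dL c c'; lia.
have Hd2 : d%:R / 2 = e%:R :> R by rewrite He natrD; lra.
rewrite Hd2 in Hsq *.
have Hlt : (n * (n - e) < (n - t) * (n - t))%N.
  rewrite -(ltr_nat R) !natrM !natrB //; last exact: ltnW.
  have Hs0 := sqrtr_ge0 (n%:R * (n%:R - e%:R) : R).
  have Hs2 := sqr_sqrtr (_ : 0 <= n%:R * (n%:R - e%:R) :> R).
  have HX : 0 <= n%:R * (n%:R - e%:R) :> R.
    by apply: mulr_ge0; rewrite ?ler0n // subr_ge0 ler_nat.
  move: (Hs2 HX) Hs0 Hsq; set s := Num.sqrt _ => Hs2' Hs0 Hsq'.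
  rewrite -Hs2'; nra.
set W := (maxn N n - t)%N.
set L := [set c in C | inBL v t t c].
have Hex : forall c, c \in L -> exists S : {set 'I_N},
    (#|S| == W) && subseq [seq tnth v i | i <- enum S] c.
  move=> c; rewrite inE => /andP[HcC /existsP [a' /existsP [b' Hr]]].
  case: (sound Hr) => z [Hzv Hzc Hs1 Hs2].
  have Ha' := ltn_ord a'; have Hb' := ltn_ord b'.
  rewrite !size_tuple in Hs1 Hs2.
  have HzW : (W <= size z)%N.
    move: Hs1 Hs2; rewrite /W; set sz := size z; lia.
  set z' := take W z.
  have Hz'v : subseq z' v := subseq_trans (take_subseq z W) Hzv.
  have Hz'c : subseq z' c := subseq_trans (take_subseq z W) Hzc.
  have Hz'W : size z' = W by rewrite size_takel.
  case/subseqP: Hz'v => m Hm Ez'.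
  rewrite size_tuple in Hm.
  exists [set i : 'I_N | nth false m i].
  have E : [seq tnth v i | i <- enum [set i : 'I_N | nth false m i]] = z'.
    rewrite Ez' /enum_mem filter_mask map_mask -enumT map_tnth_enum.
    congr mask.
    rewrite -[in RHS](mkseq_nth false m) Hm /mkseq -val_enum_ord -map_comp.
    by apply: eq_map => i /=; rewrite inE.
  rewrite E Hz'c andbT cardE -(size_map (tnth v)) E Hz'W.
  by [].
pose P := fun (c : n.-tuple T) (S : {set 'I_N}) =>
  (#|S| == W) && subseq [seq tnth v i | i <- enum S] c.
pose Sf := fun c => odflt set0 [pick S | P c S].
have HSf : forall c, c \in L -> P c (Sf c).
  move=> c Hc; rewrite /Sf; case: pickP => [S HS | H0] //=.
  by case: (Hex c Hc) => S HS; move: (H0 S); rewrite /P HS.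
have HJ := @johnson _ N Sf L W (n - e)%N.
have HJ' : (#|L| * W * (#|L| * W) <= N * (#|L| * (W + (#|L| - 1) * (n - e))))%N.
  apply: HJ.
    by move=> c Hc; have /andP[/eqP -> _] := HSf c Hc.
  move=> c c' Hc Hc' Hcc.
  have /andP[_ Hsc] := HSf c Hc; have /andP[_ Hsc'] := HSf c' Hc'.
  move: Hc Hc'; rewrite !inE => /andP[HcC _] /andP[Hc'C _].
  rewrite cardE -(size_map (tnth v)); apply: (Hpair c c') => //.
    apply: subseq_trans Hsc; apply: map_subseq; apply: enum_sub; exact: subsetIl.
  apply: subseq_trans Hsc'; apply: map_subseq; apply: enum_sub; exact: subsetIr.
rewrite -/l in HJ'.
set D := ((n - t) * (n - t) - n * (n - e))%N.
have Het : (t < e)%N.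
  rewrite ltnNge; apply/negP => H.
  have : ((n - t) * (n - t) <= n * (n - e))%N by apply: leq_mul; lia.
  lia.
have Hkey : (l * D <= e * (n + t))%N.
  case: (posnP l) => [-> //|Hl0].
  have F3 : (l * (W * W) <= N * (W + (l - 1) * (n - e)))%N.
    rewrite -(leq_pmul2l Hl0).
    have E1 : (l * (l * (W * W)) = l * W * (l * W))%N by ring.
    have E2 : (l * (N * (W + (l - 1) * (n - e))) = N * (l * (W + (l - 1) * (n - e))))%N by ring.
    by rewrite E1 E2.
  have HWn : (W <= n)%N by rewrite /W; lia.
  have F2 : (N * W <= N * (n - e) + e * (n + t))%N.
    apply: (@leq_trans (N * ((n - e) + e))); first by rewrite leq_mul2l subnK // HWn orbT.
    by rewrite mulnDr leq_add2l mulnC leq_mul2l HN2 orbT.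
  have Hlu : (n - e <= n - t)%N by lia.
  have F1 : (N * (n - e) + D <= W * W)%N.
    rewrite /D /W; case: (leqP n N) => HnN.
      have E1 : N = (n + (N - n))%N by lia.
      have Eu : (N - t = (n - t) + (N - n))%N by lia.
      rewrite Eu.
      move: Hlt Hlu E1; set k := (N - n)%N; set lam := (n - e)%N; set u := (n - t)%N.
      move=> Hlt' Hlu' E1.
      have H1 : (N * lam = n * lam + k * lam)%N by rewrite {1}E1 mulnDl.
      have H2 : ((u + k) * (u + k) = u * u + k * u + k * u + k * k)%N by ring.
      have H3 := leq_mul (leqnn k) Hlu'.
      rewrite H1 H2; lia.
    have := leq_mul (ltnW HnN) (leqnn (n - e)).
    move: Hlt; set lam := (n - e)%N; set u := (n - t)%N; lia.
  have F4 : (l * (N * (n - e) + D) <= l * (W * W))%N by rewrite leq_mul2l F1 orbT.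
  have E5 : (N * ((l - 1) * (n - e)) + N * (n - e) = l * (N * (n - e)))%N.
    rewrite -mulnDr -[X in (_ + X)%N]mul1n -mulnDl subnK //; ring.
  rewrite mulnDr in F4 F3; lia.
have HD0 : (0 < D)%N by rewrite /D; lia.
have HD : (e%:R - 2 * t%:R) * n%:R + t%:R ^+ 2 = D%:R :> R.
  rewrite /D natrB; last exact: ltnW.
  rewrite !natrM !natrB //; last exact: ltnW.
  ring.
have HDp : 0 < D%:R :> R by rewrite ltr0n.
rewrite HD; split.
  rewrite ler_pdivlMr // -!natrM ler_nat; lia.
rewrite ler_pdivrMr // -!natrM ler_nat.
rewrite He.
have : (e * (n + t) <= e * (n + n))%N by rewrite leq_mul2l; lia.
have : (n * (e + e) <= n * (e + e) * D)%N by rewrite leq_pmulr.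
lia.
Qed.
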